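(* Let $n\ge2$ and $k$ a field. Then $\mathsf{G}^0([n],k)$ is free abelian of rank $3$ with basis $[J_{0,n}]$, $[S_{[n]}]$, $T_{[n]}=[J_{0,n-1}]+[J_{1,n}]-[J_{1,n-1}]$, and $\mathsf{E}^0([n],k)$ is free abelian of rank $2$ with basis $[J_{0,n}]$, $T_{[n]}$. In particular the natural map $\mathsf{E}^0([n],k)\to\mathsf{G}^0([n],k)$ is split injective with cokernel generated by the image of $[S_{[n]}]$ (infinite cyclic).
   Context: $[n]$ is the poset $0<1<\cdots<n$ viewed as a category; $k[n]$-modules are functors to finite-dimensional $k$-vector spaces and $\mathrm{Gr}$ is the split Grothendieck group. For $0\le a\le b\le n$, $J_{a,b}$ is the module with value $k$ at $i\in\{a,\dots,b\}$, $0$ elsewhere, and identity maps $J_{a,b}(i<j)$ for $a\le i\le j\le b$. $S_{[n]}$ is the module with value $k$ everywhere and zero maps on strict relations. $\mathcal{E}^{[n]}_1$ is the poset of strict relations $i<j$ (written $ij$) with $ij\le i'j'$ iff $i\le i'$ and $j\le j'$; $\mathcal{G}^{[n]}_1$ is the poset of strict relations with $ij\le i'j'$ iff equal or $j\le i'$. In both, $\partial_0(ij)=j$, $\partial_1(ij)=i$. $\mathsf{E}^0([n],k)$ (resp. $\mathsf{G}^0([n],k)$) is the kernel of $\partial_0^*-\partial_1^*:\mathrm{Gr}(k[n])\to\mathrm{Gr}(k\mathcal{E}^{[n]}_1)$ (resp. $\to\mathrm{Gr}(k\mathcal{G}^{[n]}_1)$), with $F^*M=M\circ F$. The natural map $\mathsf{E}^0\to\mathsf{G}^0$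 is induced by the inclusion $\mathcal{G}^{[n]}_1\subseteq\mathcal{E}^{[n]}_1$ (identity on $\mathrm{Gr}(k[n])$). *)

(* Defs.v *)
From HB Require Import structures.
From mathcomp Require Import all_boot all_order all_algebra.
Set Implicit Arguments. Unset Strict Implicit. Unset Printing Implicit Defensive.
Import GRing.Theory.
Local Open Scope ring_scope.

(* A k-linear functor from (T,le) to finite-dimensional k-vector spaces, in
   coordinates: the space at x is k^(rdim x) (row vectors) and the map
   M(x <= y) is  v |-> v *m rmap x y.  Values of rmap at non-comparable
   pairs are irrelevant. *)
Record rep (T : Type) (k : fieldType) := Rep {
  rdim : T -> nat ;
  rmap : forall x y : T, 'M[k]_(rdim x, rdim y) }.

Section Reps.
Variables (T : Type) (k : fieldType).

Definition is_module (le : rel T) (M : rep T k) : Prop :=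
  (forall x, le x x -> rmap M x x = 1%:M) /\
  (forall x y z, le x y -> le y z -> rmap M x y *m rmap M y z = rmap M x z).

Definition zero_rep : rep T k := @Rep T k (fun _ => 0%N) (fun _ _ => 0).

Definition dsum (M N : rep T k) : rep T k :=
  @Rep T k (fun x => (rdim M x + rdim N x)%N)
    (fun x y => block_mx (rmap M x y) 0 0 (rmap N x y)).

Definition iso (le : rel T) (M N : rep T k) : Prop :=
  exists (f : forall x, 'M[k]_(rdim M x, rdim N x))
         (g : forall x, 'M[k]_(rdim N x, rdim M x)),
    (forall x, f x *m g x = 1%:M /\ g x *m f x = 1%:M) /\
    (forall x y, le x y -> rmap M x y *m f y = f x *m rmap N x y).

(* An element [M] - [N] is represented by the pair (M, N). *)
Definition vmod := (rep T k * rep T k)%type.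

Definition is_vmod (le : rel T) (x : vmod) : Prop :=
  is_module le x.1 /\ is_module le x.2.

Definition grEq (le : rel T) (x y : vmod) : Prop :=
  exists X : rep T k, is_module le X /\
    iso le (dsum (dsum x.1 y.2) X) (dsum (dsum y.1 x.2) X).

Definition cls (M : rep T k) : vmod := (M, zero_rep).
Definition vzero : vmod := (zero_rep, zero_rep).
Definition vadd (x y : vmod) : vmod := (dsum x.1 y.1, dsum x.2 y.2).
Definition vopp (x : vmod) : vmod := (x.2, x.1).
Definition vsub (x y : vmod) : vmod := vadd x (vopp y).
Definition vnat (m : nat) (x : vmod) : vmod := iter m (vadd x) vzero.
Definition vscale (z : int) (x : vmod) : vmod :=
  match z with
  | Posz m => vnat m x
  | Negz m => vopp (vnat m.+1 x)
  end.
End Reps.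

Definition pull (U T : Type) (k : fieldType) (F : U -> T) (M : rep T k) : rep U k :=
  @Rep U k (fun u => rdim M (F u)) (fun u v => rmap M (F u) (F v)).

Definition vpull (U T : Type) (k : fieldType) (F : U -> T) (x : vmod T k) :
  vmod U k := (pull F x.1, pull F x.2).

Definition leN (n : nat) : rel 'I_n.+1 := fun i j => (i <= j)%N.

Definition srel (n : nat) := {p : 'I_n.+1 * 'I_n.+1 | (p.1 < p.2)%N}.

Definition leE (n : nat) : rel (srel n) :=
  fun r s => ((sval r).1 <= (sval s).1)%N && ((sval r).2 <= (sval s).2)%N.
Definition leG (n : nat) : rel (srel n) :=
  fun r s => (sval r == sval s) || ((sval r).2 <= (sval s).1)%N.

Definition d0 (n : nat) (r : srel n) : 'I_n.+1 := (sval r).2.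
Definition d1 (n : nat) (r : srel n) : 'I_n.+1 := (sval r).1.

(* E^0([n],k) and G^0([n],k): kernels of d0^* - d1^* on Gr(k[n]) *)
Definition E0 (k : fieldType) (n : nat) (x : vmod 'I_n.+1 k) : Prop :=
  grEq (@leE n) (vpull (@d0 n) x) (vpull (@d1 n) x).
Definition G0 (k : fieldType) (n : nat) (x : vmod 'I_n.+1 k) : Prop :=
  grEq (@leG n) (vpull (@d0 n) x) (vpull (@d1 n) x).

Definition Jmod (k : fieldType) (n a b : nat) : rep 'I_n.+1 k :=
  @Rep 'I_n.+1 k (fun i => nat_of_bool ((a <= i)%N && (i <= b)%N))
    (fun i j => const_mx 1).

Definition Smod (k : fieldType) (n : nat) : rep 'I_n.+1 k :=
  @Rep 'I_n.+1 k (fun _ => 1%N) (fun i j => if i == j then 1%:M else 0).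

Definition Tcls (k : fieldType) (n : nat) : vmod 'I_n.+1 k :=
  vsub (vadd (cls (Jmod k n 0 n.-1)) (cls (Jmod k n 1 n))) (cls (Jmod k n 1 n.-1)).

(* Main.v *)
Require Import Defs.
From HB Require Import structures.
From mathcomp Require Import all_boot all_order all_algebra.
From mathcomp Require Import zify ring.
Set Implicit Arguments. Unset Strict Implicit. Unset Printing Implicit Defensive.
Import GRing.Theory.
Local Open Scope ring_scope.

Section Generic.
Variables (T : Type) (k : fieldType) (le : rel T).
Implicit Types M N P Q : rep T k.

Lemma iso_refl M : iso le M M.
Proof.
exists (fun x => 1%:M), (fun x => 1%:M); split => [x|x y _]; first by rewrite mul1mx.
by rewrite mulmx1 mul1mx.
Qed.

Lemma iso_sym M N : iso le M N -> iso le N M.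
Proof.
move=> [f [g [fg nat]]]; exists g, f; split => [x|x y lxy]; first by have [] := fg x.
have [f1 g1] := fg x; have [f2 g2] := fg y.
have h := nat x y lxy.
have -> : g x *m rmap M x y = g x *m (rmap M x y *m f y) *m g y.
  by rewrite -!mulmxA f2 mulmx1.
by rewrite h !mulmxA g1 mul1mx.
Qed.

Lemma iso_trans M N P : iso le M N -> iso le N P -> iso le M P.
Proof.
move=> [f [g [fg nf]]] [f' [g' [fg' nf']]].
exists (fun x => f x *m f' x), (fun x => g' x *m g x); split => [x|x y lxy].
  have [a1 a2] := fg x; have [b1 b2] := fg' x; split.
    by rewrite -!mulmxA (mulmxA (f' x)) b1 mul1mx a1.
  by rewrite -!mulmxA (mulmxA (g x)) a2 mul1mx b2.
by rewrite mulmxA (nf _ _ lxy) -mulmxA (nf' _ _ lxy) mulmxA.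
Qed.

Lemma iso_dsum M M' N N' : iso le M M' -> iso le N N' -> iso le (dsum M N) (dsum M' N').
Proof.
move=> [f [g [fg nf]]] [f' [g' [fg' nf']]].
exists (fun x => block_mx (f x) 0 0 (f' x)), (fun x => block_mx (g x) 0 0 (g' x)).
split => [x|x y lxy].
  have [a1 a2] := fg x; have [b1 b2] := fg' x.
  by rewrite !mulmx_block !mulmx0 !mul0mx !addr0 !add0r a1 a2 b1 b2 -!scalar_mx_block.
by rewrite /= !mulmx_block !mulmx0 !mul0mx !addr0 !add0r (nf _ _ lxy) (nf' _ _ lxy).
Qed.

Lemma iso_dsumC M N : iso le (dsum M N) (dsum N M).
Proof.
exists (fun x => block_mx 0 1%:M 1%:M 0), (fun x => block_mx 0 1%:M 1%:M 0).
split => [x|x y lxy].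
  by rewrite !mulmx_block !mulmx0 !mul0mx !addr0 !add0r !mulmx1 -!scalar_mx_block.
by rewrite /= !mulmx_block !mulmx0 !mul0mx !addr0 !add0r !mulmx1 !mul1mx.
Qed.

(* identity-like matrix between possibly different-but-equal sizes *)
Definition idm m p : 'M[k]_(m, p) := \matrix_(i, j) ((i : nat) == j)%:R.
End Generic.

Lemma cm1 (k : fieldType) m n n' (e : n = n') (A : 'M[k]_(m,n)) :
  A *m castmx (erefl n, e) 1%:M = castmx (erefl m, e) A.
Proof. by case: n' / e; rewrite !castmx_id mulmx1. Qed.

Lemma cm2 (k : fieldType) m n' p p' (e : m = n') (e' : p = p') (B : 'M[k]_(m,p)) :
  castmx (erefl m, e) 1%:M *m castmx (e, e') B = castmx (erefl m, e') B.
Proof. by case: n' / e; case: p' / e'; rewrite !castmx_id mul1mx. Qed.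

Lemma cm3 (k : fieldType) m n' (e : m = n') :
  castmx (erefl m, e) (1%:M : 'M[k]_m) *m castmx (e, erefl m) 1%:M = 1%:M
  /\ castmx (e, erefl m) (1%:M : 'M[k]_m) *m castmx (erefl m, e) 1%:M = 1%:M.
Proof. by case: n' / e; rewrite !castmx_id mul1mx. Qed.

Section Generic2.
Variables (T : Type) (k : fieldType) (le : rel T).
Implicit Types M N P Q : rep T k.

Lemma iso_cast M N (e : forall x, rdim M x = rdim N x) :
  (forall x y, le x y -> rmap N x y = castmx (e x, e y) (rmap M x y)) -> iso le M N.
Proof.
move=> h; exists (fun x => castmx (erefl _, e x) 1%:M), (fun x => castmx (e x, erefl _) 1%:M).
split => [x|x y lxy]; first by apply: cm3.
by rewrite cm1 h // cm2.
Qed.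

Lemma iso_dsumA M N P : iso le (dsum (dsum M N) P) (dsum M (dsum N P)).
Proof.
apply: (@iso_cast (dsum (dsum M N) P) (dsum M (dsum N P)) (fun x => esym (addnA (rdim M x) (rdim N x) (rdim P x)))) => x y _ /=.
by have := @block_mxA k _ _ _ _ _ _ (rmap M x y) 0 0 0 (rmap N x y) 0 0 0 (rmap P x y); rewrite /= !row_mx0 !col_mx0.
Qed.

Lemma rk_dsum M N x y : \rank (rmap (dsum M N) x y) = (\rank (rmap M x y) + \rank (rmap N x y))%N.
Proof. exact: rank_diag_block_mx. Qed.

Lemma iso_rank M N x y : iso le M N -> le x y -> \rank (rmap M x y) = \rank (rmap N x y).
Proof.
move=> [f [g [fg nf]]] lxy; have [a1 a2] := fg x; have [b1 b2] := fg y.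
have e1 : \rank (rmap M x y) = \rank (rmap M x y *m f y).
  apply/eqP; rewrite eqn_leq mxrankM_maxl andbT.
  by rewrite -{1}[rmap M x y]mulmx1 -b1 mulmxA mxrankM_maxl.
rewrite e1 nf //; apply/eqP; rewrite eqn_leq mxrankM_maxr /=.
by rewrite -{1}[rmap N x y]mul1mx -a2 -mulmxA mxrankM_maxr.
Qed.

Lemma iso_dim M N x : iso le M N -> rdim M x = rdim N x.
Proof.
move=> [f [g [fg _]]]; have [a1 a2] := fg x; apply/eqP; rewrite eqn_leq.
have h1 := mxrankM_maxl (f x) (g x); rewrite a1 mxrank1 in h1.
have h2 := mxrankM_maxl (g x) (f x); rewrite a2 mxrank1 in h2.
by rewrite (leq_trans h1 (rank_leq_col _)) (leq_trans h2 (rank_leq_col _)).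
Qed.

Lemma is_module_dsum M N : is_module le M -> is_module le N -> is_module le (dsum M N).
Proof.
move=> [h1 h2] [h3 h4]; split => [x lx|x y z lxy lyz] /=.
  by rewrite h1 // h3 // -scalar_mx_block.
by rewrite mulmx_block !mulmx0 !mul0mx !addr0 !add0r h2 // h4.
Qed.

Lemma is_module_zero : is_module le (zero_rep T k).
Proof. by split => [x _|x y z _ _] /=; apply/matrixP => [[]]. Qed.

End Generic2.

Section Groth.
Variables (T : Type) (k : fieldType) (le : rel T).
Implicit Types M N P Q : rep T k.
Implicit Types x y : vmod T k.

Lemma iso_shuffle (A B C D : rep T k) :
  iso le (dsum (dsum A B) (dsum C D)) (dsum (dsum A C) (dsum B D)).
Proof.
apply: iso_trans (iso_dsumA _ _ _ _) _.
apply: iso_trans (iso_dsum (iso_refl _ _) (iso_sym (iso_dsumA _ _ _ _))) _.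
apply: iso_trans (iso_dsum (iso_refl _ _) (iso_dsum (iso_dsumC _ _ _) (iso_refl _ _))) _.
apply: iso_trans (iso_dsum (iso_refl _ _) (iso_dsumA _ _ _ _)) _.
exact: iso_sym (iso_dsumA _ _ _ _).
Qed.

Lemma grEq_refl x : grEq le x x.
Proof. exists (zero_rep T k); split; [exact: is_module_zero | exact: iso_refl]. Qed.

Lemma grEq_add x x' y y' : grEq le x x' -> grEq le y y' -> grEq le (vadd x y) (vadd x' y').
Proof.
move=> [X [mX hX]] [Y [mY hY]]; exists (dsum X Y); split; first exact: is_module_dsum.
apply: iso_trans (iso_dsum (iso_shuffle _ _ _ _) (iso_refl _ _)) _.
apply: iso_trans (iso_shuffle _ _ _ _) _.
apply: iso_trans (iso_dsum hX hY) _.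
apply: iso_trans (iso_shuffle _ _ _ _) _.
exact: iso_dsum (iso_shuffle _ _ _ _) (iso_refl _ _).
Qed.

Lemma grEq_opp x x' : grEq le x x' -> grEq le (vopp x) (vopp x').
Proof.
move=> [X [mX hX]]; exists X; split => //.
apply: iso_trans (iso_dsum (iso_dsumC _ _ _) (iso_refl _ _)) _.
apply: iso_trans (iso_sym hX) _.
exact: iso_dsum (iso_dsumC _ _ _) (iso_refl _ _).
Qed.

Lemma grEq_nat m x x' : grEq le x x' -> grEq le (vnat m x) (vnat m x').
Proof. by move=> h; elim: m => [|m IH] /=; [exact: grEq_refl | exact: grEq_add]. Qed.

Lemma grEq_scale z x x' : grEq le x x' -> grEq le (vscale z x) (vscale z x').
Proof. by case: z => m h; [exact: grEq_nat | apply: grEq_opp; exact: grEq_nat]. Qed.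

Lemma grEq_sub (le' : rel T) x y : subrel le' le -> grEq le x y -> grEq le' x y.
Proof.
move=> s [X [[m1 m2] [f [g [fg nf]]]]]; exists X; split.
  by split => [z /s|a b c /s h1 /s h2]; [exact: m1 | exact: m2].
by exists f, g; split => // a b /s; exact: nf.
Qed.

Lemma iso_ind (c1 c2 : T -> bool) : c1 =1 c2 ->
  iso le (@Rep T k (fun (u : T) => nat_of_bool (c1 u)) (fun (u v : T) => const_mx 1))
         (@Rep T k (fun (u : T) => nat_of_bool (c2 u)) (fun (u v : T) => const_mx 1)).
Proof.
move=> e; apply: (@iso_cast T k le (@Rep T k (fun u => nat_of_bool (c1 u)) (fun u v => const_mx 1))
  (@Rep T k (fun u => nat_of_bool (c2 u)) (fun u v => const_mx 1))
  (fun u : T => congr1 nat_of_bool (e u))) => u v _ /=.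
by apply/matrixP => i j; rewrite castmxE !mxE.
Qed.

End Groth.


Lemma mx_dim0 (k : fieldType) m p (X Y : 'M[k]_(m, p)) : (m == 0)%N || (p == 0)%N -> X = Y.
Proof.
case/orP => /eqP e; apply/matrixP => i j.
  by exfalso; move: (ltn_ord i); move: (i : nat) => i'; rewrite e.
by exfalso; move: (ltn_ord j); move: (j : nat) => j'; rewrite e.
Qed.

Lemma constM (k : fieldType) m p q (x y : k) :
  (const_mx x : 'M_(m, p)) *m (const_mx y : 'M_(p, q)) = const_mx (x * y *+ p).
Proof.
apply/matrixP => i j; rewrite !mxE.
under eq_bigr do rewrite !mxE.
by rewrite sumr_const card_ord.
Qed.

Lemma const1 (k : fieldType) m : (m <= 1)%N -> (const_mx 1 : 'M[k]_m) = 1%:M.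
Proof.
move=> hm; apply/matrixP => i j; rewrite !mxE.
have -> : i = j by apply/val_inj => /=; move: (ltn_ord i) (ltn_ord j); lia.
by rewrite eqxx.
Qed.

Section Split.
Variables (k : fieldType) (n : nat) (M : rep 'I_n.+1 k).
Hypothesis hM : is_module (@leN n) M.
Variables (a b : 'I_n.+1).
Hypothesis hab : (a <= b)%N.
Hypothesis hmin : forall i : 'I_n.+1, (i < a)%N -> rdim M i = 0%N.
Hypothesis hmax : forall j : 'I_n.+1, (b < j)%N -> rmap M a j = 0.
Variables (v : 'M[k]_(1, rdim M a)) (lam : 'M[k]_(rdim M b, 1)).
Hypothesis hvl : v *m rmap M a b *m lam = 1%:M.

Local Notation d := (rdim M).
Local Notation A := (rmap M).

Lemma Aid i : A i i = 1%:M.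
Proof. by apply: hM.1; rewrite /leN. Qed.
Lemma Acomp (i j l : 'I_n.+1) : (i <= j)%N -> (j <= l)%N -> A i j *m A j l = A i l.
Proof. by move=> h1 h2; apply: hM.2. Qed.

Definition u i := v *m A a i.
Definition l i := A i b *m lam.
Definition ein (i : 'I_n.+1) := (a <= i)%N && (i <= b)%N.
Definition U i : 'M[k]_(nat_of_bool (ein i), d i) := const_mx 1 *m u i.
Definition L i : 'M[k]_(d i, nat_of_bool (ein i)) := l i *m const_mx 1.
Definition P i := L i *m U i.
Definition Q i := 1%:M - P i.

Lemma F1 (i j : 'I_n.+1) : (a <= i)%N -> (i <= j)%N -> u i *m A i j = u j.
Proof. by move=> h1 h2; rewrite /u -mulmxA Acomp. Qed.
Lemma F2 (i j : 'I_n.+1) : (i <= j)%N -> (j <= b)%N -> A i j *m l j = l i.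
Proof. by move=> h1 h2; rewrite /l mulmxA Acomp. Qed.
Lemma F3 (i : 'I_n.+1) : (a <= i)%N -> (i <= b)%N -> u i *m l i = 1%:M.
Proof. by move=> h1 h2; rewrite /u /l mulmxA -(mulmxA v) Acomp. Qed.
Lemma F0 (j : 'I_n.+1) : (b < j)%N -> u j = 0.
Proof. by move=> h; rewrite /u hmax // mulmx0. Qed.

Lemma La (i j : 'I_n.+1) : (i <= j)%N ->
  A i j *m L j = L i *m (const_mx 1 : 'M_(nat_of_bool (ein i), nat_of_bool (ein j))).
Proof.
move=> hij; case/orP: (orbN (ein j)) => cj; last by apply: mx_dim0; apply/orP; right; apply/eqP; move: cj; case: (ein j).
move: (cj); rewrite /ein => /andP [aj jb].
rewrite /L mulmxA F2 // -[in RHS]mulmxA constM.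
case/orP: (orbN (ein i)) => ci.
  by have -> : (1 * 1 *+ nat_of_bool (ein i) : k) = 1 by rewrite ci mulr1 mulr1n.
apply: mx_dim0; apply/orP; left; rewrite hmin //.
move: ci; rewrite /ein; apply: contraNT; rewrite -leqNgt => ai.
by rewrite ai (leq_trans hij jb).
Qed.

Lemma Ub (i j : 'I_n.+1) : (i <= j)%N ->
  U i *m A i j = (const_mx 1 : 'M_(nat_of_bool (ein i), nat_of_bool (ein j))) *m U j.
Proof.
move=> hij; case/orP: (orbN (ein i)) => ci; last by apply: mx_dim0; apply/orP; left; apply/eqP; move: ci; case: (ein i).
move: (ci); rewrite /ein => /andP [ai ib].
rewrite /U -mulmxA F1 // [in RHS]mulmxA constM.
case/orP: (orbN (ein j)) => cj.
  by have -> : (1 * 1 *+ nat_of_bool (ein j) : k) = 1 by rewrite cj mulr1 mulr1n.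
have bj : (b < j)%N.
  by move: cj; rewrite /ein (leq_trans ai hij) /= -ltnNge.
by rewrite F0 // !mulmx0.
Qed.

Lemma ULc i : U i *m L i = 1%:M.
Proof.
case/orP: (orbN (ein i)) => ci; last by apply: mx_dim0; apply/orP; left; apply/eqP; move: ci; case: (ein i).
move: (ci); rewrite /ein => /andP [ai ib].
rewrite /U /L mulmxA -(mulmxA _ (u i)) F3 // mulmx1 constM.
by rewrite mulr1 mulr1n const1 // leq_b1.
Qed.

Lemma PA (i j : 'I_n.+1) : (i <= j)%N -> P i *m A i j = A i j *m P j.
Proof. by move=> h; rewrite /P -mulmxA Ub // mulmxA -La // mulmxA. Qed.

Lemma PP i : P i *m P i = P i.
Proof. by rewrite /P mulmxA -(mulmxA (L i)) ULc mulmx1. Qed.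

Lemma QQ i : Q i *m Q i = Q i.
Proof. by rewrite /Q mulmxBl mul1mx mulmxBr mulmx1 PP subrr subr0. Qed.

Lemma QA (i j : 'I_n.+1) : (i <= j)%N -> Q i *m A i j = A i j *m Q j.
Proof. by move=> h; rewrite /Q mulmxBl mulmxBr mul1mx mulmx1 PA. Qed.

Lemma UQ i : U i *m Q i = 0.
Proof. by rewrite /Q mulmxBr mulmx1 /P mulmxA ULc mul1mx subrr. Qed.

Lemma QL i : Q i *m L i = 0.
Proof. by rewrite /Q mulmxBl mul1mx /P -mulmxA ULc mulmx1 subrr. Qed.

Definition B i := row_base (Q i).

Lemma BQ i : (B i <= Q i)%MS.
Proof. by rewrite /B eq_row_base. Qed.
Lemma QB i : (Q i <= B i)%MS.
Proof. by rewrite /B eq_row_base. Qed.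

Lemma subQ i m (X : 'M_(m, d i)) : (X <= Q i)%MS -> X *m Q i = X.
Proof. by case/submxP => D ->; rewrite -mulmxA QQ. Qed.

Lemma BBp i : B i *m pinvmx (B i) = 1%:M.
Proof.
apply: (row_free_inj (row_base_free (Q i))).
by rewrite mulmxKpV // mul1mx.
Qed.

Lemma BA (i j : 'I_n.+1) : (i <= j)%N -> (B i *m A i j <= B j)%MS.
Proof.
move=> h; rewrite -(subQ (BQ i)) -mulmxA QA // mulmxA.
exact: submx_trans (submxMl _ _) (QB j).
Qed.

Definition K := @Rep 'I_n.+1 k (fun i => \rank (Q i))
  (fun i j => B i *m A i j *m pinvmx (B j)).

Lemma K_module : is_module (@leN n) K.
Proof.
split => [x _|x y z hxy hyz] /=; first by rewrite Aid mulmx1 BBp.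
rewrite (mulmxA (B x *m A x y *m pinvmx (B y))) (mulmxA (B x *m A x y *m pinvmx (B y)) (B y)) (mulmxKpV (BA hxy)).
by rewrite -(mulmxA (B x)) Acomp.
Qed.

Lemma split_iso : iso (@leN n) M (dsum (Jmod k n a b) K).
Proof.
exists (fun i => row_mx (L i) (Q i *m pinvmx (B i))), (fun i => col_mx (U i) (B i)).
split => [i|i j hij].
  split.
    rewrite mul_row_col (mulmxKpV (QB i)) /Q /P addrC subrK //.
  have BL : B i *m L i = 0 by rewrite -(subQ (BQ i)) -mulmxA QL mulmx0.
  rewrite mul_col_row ULc (mulmxA (U i)) UQ mul0mx BL.
  by rewrite (mulmxA (B i)) (subQ (BQ i)) BBp -scalar_mx_block.
rewrite /= mul_mx_row mul_row_block !mulmx0 addr0 add0r.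
rewrite La //; congr row_mx.
rewrite (mulmxA (Q i *m pinvmx (B i))) (mulmxA (Q i *m pinvmx (B i)) (B i)).
by rewrite (mulmxKpV (QB i)) QA // mulmxA.
Qed.
End Split.

Lemma nz_entry (k : fieldType) m p (X : 'M[k]_(m, p)) : X != 0 -> exists s t, X s t != 0.
Proof.
move=> nz; case: (pickP (fun st : 'I_m * 'I_p => X st.1 st.2 != 0)) => [[s t] h|h].
  by exists s, t.
exfalso; move/eqP: nz; apply; apply/matrixP => s t; rewrite mxE.
by move: (h (s, t)) => /= /negbFE /eqP.
Qed.

Lemma vlam (k : fieldType) m p (X : 'M[k]_(m, p)) : X != 0 ->
  exists (v : 'M[k]_(1, m)) (lam : 'M[k]_(p, 1)), v *m X *m lam = 1%:M.
Proof.
move=> /nz_entry [s [t h]].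
exists (delta_mx 0 s), ((X s t)^-1 *: delta_mx t 0).
rewrite -rowE -scalemxAr -colE; apply/matrixP => i j.
by rewrite (ord1 i) (ord1 j) !mxE eqxx mulVf.
Qed.

Section Complete.
Variables (k : fieldType) (n : nat).
Local Notation le := (@leN n).
Implicit Types M N : rep 'I_n.+1 k.

Definition Dm M := (\sum_(i < n.+1) rdim M i)%N.

Lemma mod_dim M i : is_module le M -> \rank (rmap M i i) = rdim M i.
Proof. by move=> [h _]; rewrite h ?mxrank1 // /leN. Qed.

Lemma iso_zero M N : (forall i, rdim M i = 0%N) -> (forall i, rdim N i = 0%N) -> iso le M N.
Proof.
move=> hM hN; exists (fun _ => 0), (fun _ => 0); split => [x|x y _].
  by split; apply: mx_dim0; rewrite ?hM ?hN.
by apply: mx_dim0; rewrite hM.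
Qed.

Lemma dims_zero_N M N : is_module le M -> is_module le N ->
  (forall i j : 'I_n.+1, (i <= j)%N -> \rank (rmap M i j) = \rank (rmap N i j)) ->
  forall i, rdim M i = rdim N i.
Proof. by move=> hM hN hr i; rewrite -(mod_dim i hM) -(mod_dim i hN) hr. Qed.

Lemma complete c : forall M N, (Dm M <= c)%N -> is_module le M -> is_module le N ->
  (forall i j : 'I_n.+1, (i <= j)%N -> \rank (rmap M i j) = \rank (rmap N i j)) ->
  iso le M N.
Proof.
elim: c => [|c IH] M N hD hM hN hr; have hdim := dims_zero_N hM hN hr.
  have z : forall i, rdim M i = 0%N.
    move=> i; apply/eqP; rewrite -leqn0; apply: leq_trans hD.
    by rewrite /Dm (bigD1 i) //= leq_addr.
  by apply: iso_zero => // i; rewrite -hdim.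
case: (pickP (fun i : 'I_n.+1 => (0 < rdim M i)%N)) => [i0 hi0|hz]; last first.
  have z : forall i, rdim M i = 0%N by move=> i; apply/eqP; rewrite -leqn0 leqNgt hz.
  by apply: iso_zero => // i; rewrite -hdim.
have exa : exists m, (m < n.+1)%N && (0 < rdim M (inord m))%N.
  by exists i0; rewrite ltn_ord inord_val hi0.
case: (ex_minnP exa) => m0 /andP [m0lt hm0] minm.
set a : 'I_n.+1 := inord m0.
have aval : (a : nat) = m0 by rewrite inordK.
have hminM : forall i : 'I_n.+1, (i < a)%N -> rdim M i = 0%N.
  move=> i ia; apply/eqP; rewrite -leqn0 leqNgt; apply/negP => pos.
  by have := minm i; rewrite ltn_ord inord_val pos => /(_ isT); rewrite -aval leqNgt ia.
have nzM : forall j : 'I_n.+1, (a <= j)%N -> (rmap M a j != 0) = (0 < \rank (rmap M a j))%N.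
  by move=> j _; rewrite lt0n mxrank_eq0.
have exb : exists m, ((a <= m)%N && (m < n.+1)%N) && (rmap M a (inord m) != 0).
  exists a; rewrite leqnn ltn_ord inord_val /= nzM // mod_dim //.
have bnd : forall m, ((a <= m)%N && (m < n.+1)%N) && (rmap M a (inord m) != 0) -> (m <= n)%N.
  by move=> m /andP [/andP [_ h] _].
case: (ex_maxnP exb bnd) => m1 /andP [/andP [am1 m1lt] hm1] maxm.
set b : 'I_n.+1 := inord m1.
have bval : (b : nat) = m1 by rewrite inordK.
have hab : (a <= b)%N by rewrite bval.
have hmaxM : forall j : 'I_n.+1, (b < j)%N -> rmap M a j = 0.
  move=> j bj; apply/eqP; apply/negP => /negP nz.
  have := maxm j; rewrite inord_val nz ltn_ord (leq_trans hab (ltnW bj)) /= => /(_ isT).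
  by rewrite leqNgt -bval bj.
have hnzM : rmap M a b != 0 by rewrite /b hm1.
have hminN : forall i : 'I_n.+1, (i < a)%N -> rdim N i = 0%N.
  by move=> i ia; rewrite -hdim hminM.
have hmaxN : forall j : 'I_n.+1, (b < j)%N -> rmap N a j = 0.
  move=> j bj; apply/eqP; rewrite -mxrank_eq0 -hr ?mxrank_eq0 ?hmaxM //.
  exact: leq_trans hab (ltnW bj).
have hnzN : rmap N a b != 0 by rewrite -mxrank_eq0 -hr // mxrank_eq0.
have [vM [lamM hvlM]] := vlam hnzM.
have [vN [lamN hvlN]] := vlam hnzN.
have isoM := split_iso hM hminM hmaxM hvlM.
have isoN := split_iso hN hminN hmaxN hvlN.
have mKM := K_module hM hminM hmaxM hvlM.
have mKN := K_module hN hminN hmaxN hvlN.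
have rkK : forall i j : 'I_n.+1, (i <= j)%N ->
    \rank (rmap (K vM lamM) i j) = \rank (rmap (K vN lamN) i j).
  move=> i j ij; apply/eqP; rewrite -(eqn_add2l (\rank (rmap (Jmod k n a b) i j))).
  by rewrite -!rk_dsum -(iso_rank isoM ij) -(iso_rank isoN ij) hr.
have dM : forall i, rdim M i = (nat_of_bool (ein a b i) + rdim (K vM lamM) i)%N.
  by move=> i; rewrite (iso_dim i isoM).
apply: iso_trans isoM _; apply: iso_trans _ (iso_sym isoN).
apply: iso_dsum; first exact: iso_refl.
apply: IH => //.
move: hD; rewrite /Dm (eq_bigr _ (fun i _ => dM i)) big_split /= => hD.
rewrite -ltnS; apply: leq_trans hD.
rewrite [X in (_ <= X)%N]addnC -addn1 leq_add2l (bigD1 a) //= /ein leqnn hab.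
exact: leq_addr.
Qed.
End Complete.


Section Rk.
Variables (T : Type) (k : fieldType).
Implicit Types x y : vmod T k.

Definition rkv x (i j : T) : int := (\rank (rmap x.1 i j))%:Z - (\rank (rmap x.2 i j))%:Z.

Lemma rkv_add x y i j : rkv (vadd x y) i j = rkv x i j + rkv y i j.
Proof. by rewrite /rkv /= !rk_dsum !PoszD; ring. Qed.

Lemma rkv_opp x i j : rkv (vopp x) i j = - rkv x i j.
Proof. by rewrite /rkv /=; ring. Qed.

Lemma rkv_zero i j : rkv (vzero T k) i j = 0.
Proof. by rewrite /rkv /= mxrank0 subrr. Qed.

Lemma rkv_nat m x i j : rkv (vnat m x) i j = rkv x i j * m%:Z.
Proof.
elim: m => [|m IH]; first by rewrite mulr0 rkv_zero.
by rewrite /= rkv_add IH -addn1 PoszD; ring.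
Qed.

Lemma rkv_scale z x i j : rkv (vscale z x) i j = z * rkv x i j.
Proof.
case: z => m.
  by rewrite (_ : vscale _ _ = vnat m x) // rkv_nat mulrC.
by rewrite (_ : vscale _ _ = vopp (vnat m.+1 x)) // rkv_opp rkv_nat NegzE; ring.
Qed.

Lemma grEq_rkv (le : rel T) x y i j : grEq le x y -> le i j -> rkv x i j = rkv y i j.
Proof.
move=> [X [_ h]] lij; have := iso_rank h lij; rewrite !rk_dsum => /eqP.
rewrite eqn_add2r => /eqP e; rewrite /rkv; apply/eqP; rewrite subr_eq addrC addrA.
by rewrite -subr_eq opprK -!PoszD e addnC.
Qed.

Lemma is_vmod_add (le : rel T) x y : is_vmod le x -> is_vmod le y -> is_vmod le (vadd x y).
Proof. by move=> [h1 h2] [h3 h4]; split; apply: is_module_dsum. Qed.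

Lemma is_vmod_opp (le : rel T) x : is_vmod le x -> is_vmod le (vopp x).
Proof. by move=> [h1 h2]; split. Qed.

Lemma is_vmod_zero (le : rel T) : is_vmod le (vzero T k).
Proof. by split; apply: is_module_zero. Qed.

Lemma is_vmod_nat (le : rel T) m x : is_vmod le x -> is_vmod le (vnat m x).
Proof.
by move=> h; elim: m => [|m IH] /=; [exact: is_vmod_zero | exact: is_vmod_add].
Qed.

Lemma is_vmod_scale (le : rel T) z x : is_vmod le x -> is_vmod le (vscale z x).
Proof.
by case: z => m h; [exact: is_vmod_nat | apply: is_vmod_opp; exact: is_vmod_nat].
Qed.

Lemma is_vmod_cls (le : rel T) (M : rep T k) : is_module le M -> is_vmod le (cls M).
Proof. by move=> h; split => //; exact: is_module_zero. Qed.

Lemma vpull_nat (U : Type) (F : U -> T) m x : vpull F (vnat m x) = vnat m (vpull F x).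
Proof. by elim: m => [|m IH] //=; rewrite -IH. Qed.

Lemma vpull_scale (U : Type) (F : U -> T) z x : vpull F (vscale z x) = vscale z (vpull F x).
Proof. by case: z => m /=; rewrite -vpull_nat. Qed.

End Rk.

Section Spec.
Variables (k : fieldType) (n : nat).
Local Notation le := (@leN n).

Lemma spanR (x y : vmod 'I_n.+1 k) : is_vmod le x -> is_vmod le y ->
  (forall i j : 'I_n.+1, (i <= j)%N -> rkv x i j = rkv y i j) -> grEq le x y.
Proof.
move=> [m1 m2] [m3 m4] h; exists (zero_rep _ k); split; first exact: is_module_zero.
apply: (@complete k n (Dm (dsum (dsum x.1 y.2) (zero_rep _ k)))) => //.
- by apply: is_module_dsum; [exact: is_module_dsum | exact: is_module_zero].
- by apply: is_module_dsum; [exact: is_module_dsum | exact: is_module_zero].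
move=> i j ij; rewrite !rk_dsum mxrank0 !addn0; apply/eqP; rewrite -eqz_nat.
move: (h i j ij); rewrite /rkv !PoszD => /eqP; rewrite subr_eq => /eqP ->.
by rewrite addrAC subrK addrC.
Qed.

Lemma Jmod_module a b : is_module le (Jmod k n a b).
Proof.
split => [x _|x y z xy yz] /=; first by rewrite const1 // leq_b1.
rewrite constM mulr1.
case/orP: (orbN ((a <= x)%N && (x <= b)%N)) => cx; last first.
  by apply: mx_dim0; apply/orP; left; move: cx; case: (_ && _).
case/orP: (orbN ((a <= z)%N && (z <= b)%N)) => cz; last first.
  by apply: mx_dim0; apply/orP; right; move: cz; case: (_ && _).
have -> : ((a <= y)%N && (y <= b)%N) = true.
  move: cx cz xy yz; rewrite /leN => /andP [ax xb] /andP [az zb] xy yz.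
  by apply/andP; split; [exact: leq_trans ax xy | exact: leq_trans yz zb].
by rewrite mulr1n.
Qed.

Lemma Smod_module : is_module le (Smod k n).
Proof.
split => [x _|x y z xy yz] /=; first by rewrite eqxx.
case: (eqVneq x y) => [<-|nxy]; first by rewrite mul1mx.
rewrite mul0mx; have -> : (x == z) = false.
  apply/negbTE; apply: contra nxy => /eqP xz; apply/eqP/val_inj => /=.
  by move: xy yz; rewrite /leN xz => h1 h2; apply/eqP; rewrite eqn_leq h1 h2.

by [].
Qed.

Lemma rk_J a b (i j : 'I_n.+1) :
  \rank (rmap (Jmod k n a b) i j) = nat_of_bool [&& (a <= i)%N, (i <= b)%N, (a <= j)%N & (j <= b)%N].
Proof.
rewrite (_ : [&& _, _, _ & _] = ((a <= i)%N && (i <= b)%N) && ((a <= j)%N && (j <= b)%N)); last first.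
  by rewrite !andbA.
rewrite /=.
case/orP: (orbN ((a <= i)%N && (i <= b)%N)) => ci; last first.
  rewrite [in RHS](negbTE ci) /=.
  apply/eqP; rewrite -leqn0; apply: leq_trans (rank_leq_row _) _.
  by move: ci; case: (_ && _).
case/orP: (orbN ((a <= j)%N && (j <= b)%N)) => cj; last first.
  rewrite [in RHS](negbTE cj) andbF /=.
  apply/eqP; rewrite -leqn0; apply: leq_trans (rank_leq_col _) _.
  by move: cj; case: (_ && _).
rewrite [in RHS]ci [in RHS]cj /=.
apply/eqP; rewrite eqn_leq; apply/andP; split.
  by apply: leq_trans (rank_leq_row _) _; move: ci; case: (_ && _).
rewrite lt0n mxrank_eq0; apply/eqP => /matrixP h.
have i0 : 'I_(nat_of_bool ((a <= i)%N && (i <= b)%N)) by rewrite ci; exact: ord0.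
have j0 : 'I_(nat_of_bool ((a <= j)%N && (j <= b)%N)) by rewrite cj; exact: ord0.
by move: (h i0 j0); rewrite !mxE; move/eqP; rewrite oner_eq0.
Qed.

Lemma rk_S (i j : 'I_n.+1) : \rank (rmap (Smod k n) i j) = nat_of_bool (i == j).
Proof.
rewrite /=; case: (i == j); first by rewrite mxrank1.
by rewrite mxrank0.
Qed.

End Spec.


Section Final.
Variables (k : fieldType) (n : nat).
Hypothesis hn : (2 <= n)%N.
Local Notation le := (@leN n).

Definition mk (i j : 'I_n.+1) (h : (i < j)%N) : srel n :=
  exist (fun p : 'I_n.+1 * 'I_n.+1 => (p.1 < p.2)%N) (i, j) h.

Lemma G0_rel (x : vmod 'I_n.+1 k) : G0 x -> forall i j i' j' : 'I_n.+1,
  forall (h : (i < j)%N) (h' : (i' < j')%N),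
  ((j <= i')%N || (((i : nat) == i') && ((j : nat) == j'))) -> rkv x j j' = rkv x i i'.
Proof.
move=> g i j i' j' h h' c.
have l : leG (mk h) (mk h') by rewrite /leG /= xpair_eqE orbC -!val_eqE.
exact: (@grEq_rkv (srel n) k (@leG n) _ _ (mk h) (mk h') g l).
Qed.

Lemma E0_rel (x : vmod 'I_n.+1 k) : E0 x -> forall i j i' j' : 'I_n.+1,
  forall (h : (i < j)%N) (h' : (i' < j')%N),
  (i <= i')%N -> (j <= j')%N -> rkv x j j' = rkv x i i'.
Proof.
move=> g i j i' j' h h' c1 c2.
have l : leE (mk h) (mk h') by rewrite /leE /= c1 c2.
exact: (@grEq_rkv (srel n) k (@leE n) _ _ (mk h) (mk h') g l).
Qed.

Lemma subGE : subrel (@leG n) (@leE n).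
Proof.
move=> [[i j] h] [[i' j'] h']; rewrite /leG /leE /= xpair_eqE.
case/orP => [/andP [/eqP -> /eqP ->]|c]; first by rewrite !leqnn.
by move: h h' => /= h h'; apply/andP; split; lia.
Qed.

Lemma E0G0 x : E0 x -> @G0 k n x.
Proof. by apply: grEq_sub; exact: subGE. Qed.

Section Shape.
Variable x : vmod 'I_n.+1 k.
Hypothesis g : G0 x.
Definition dn (i j : nat) := rkv x (inord i) (inord j).

Lemma Rn (i j i' j' : nat) : (i < j)%N -> (j <= n)%N -> (i' < j')%N -> (j' <= n)%N ->
  ((j <= i')%N || ((i == i') && (j == j'))) -> dn j j' = dn i i'.
Proof.
move=> h1 h2 h3 h4 c; rewrite /dn.
have bi : (i < n.+1)%N by lia.
have bj : (j < n.+1)%N by lia.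
have bi' : (i' < n.+1)%N by lia.
have bj' : (j' < n.+1)%N by lia.
have hh : ((inord i : 'I_n.+1) < (inord j : 'I_n.+1))%N by rewrite (inordK bi) (inordK bj).
have hh' : ((inord i' : 'I_n.+1) < (inord j' : 'I_n.+1))%N by rewrite (inordK bi') (inordK bj').
by apply: (G0_rel g hh hh'); rewrite (inordK bi) (inordK bj) (inordK bi') (inordK bj').
Qed.

Lemma Hd j : (j <= n)%N -> dn j j = dn 0 0.
Proof.
case: j => [|j] h; first by [].
by apply: Rn => //; rewrite !eqxx orbT.
Qed.

Lemma H1 i j : (0 < i)%N -> (i < j)%N -> (j <= n)%N -> dn i j = dn i.-1 i.
Proof. move=> h1 h2 h3; apply: Rn; lia. Qed.

Lemma H2 m : (1 <= m)%N -> (m <= n)%N -> dn m.-1 m = dn 0 1.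
Proof.
elim: m => [//|m IH] h1 h2.
case: m IH h1 h2 => [//|m] IH h1 h2.
rewrite H1 //= ?IH //; lia.
Qed.

Lemma H3 i j : (1 <= i)%N -> (i < j)%N -> (j <= n)%N -> dn i j = dn 0 1.
Proof. move=> h1 h2 h3; rewrite H1 // H2 //; lia. Qed.

Lemma H4 j : (1 <= j)%N -> (j < n)%N -> dn 0 j = dn 0 1.
Proof.
move=> h1 h2; rewrite -(@H3 j j.+1) //; apply/esym.
by apply: Rn; rewrite ?leqnn //; lia.
Qed.

Lemma shapeR i j : (i <= j)%N -> (j <= n)%N ->
  dn i j = if i == j then dn 0 0 else if (i == 0%N) && (j == n) then dn 0 n else dn 0 1.
Proof.
move=> h1 h2; case: (eqVneq i j) => [eij|nij]; first by subst j; exact: Hd.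
case: (eqVneq i 0%N) => [->|ni0] /=.
  case: (eqVneq j n) => [->//|njn]; apply: H4; lia.
apply: H3; lia.
Qed.
End Shape.

End Final.

Section Final2.
Variables (k : fieldType) (n : nat).
Hypothesis hn : (2 <= n)%N.
Local Notation le := (@leN n).

Lemma rkv_cls (T : Type) (M : rep T k) i j : rkv (cls M) i j = Posz (\rank (rmap M i j)).
Proof. by rewrite /rkv /= mxrank0 subr0. Qed.

Lemma rkv_J (i j : 'I_n.+1) : (i <= j)%N -> rkv (cls (Jmod k n 0 n)) i j = 1.
Proof. by move=> ij; rewrite rkv_cls rk_J; move: (ltn_ord i) (ltn_ord j); lia. Qed.

Lemma rkv_S (i j : 'I_n.+1) : rkv (cls (Smod k n)) i j = Posz (nat_of_bool ((i : nat) == j)).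
Proof. by rewrite rkv_cls rk_S. Qed.

Lemma rkv_T (i j : 'I_n.+1) : (i <= j)%N ->
  rkv (Tcls k n) i j = 1 - Posz (nat_of_bool (((i : nat) == 0%N) && ((j : nat) == n))).
Proof.
move=> ij; rewrite /Tcls /vsub !rkv_add rkv_opp !rkv_cls !rk_J.
by move: (ltn_ord i) (ltn_ord j); lia.
Qed.

Lemma iso_pullJ (le' : rel (srel n)) (F G : srel n -> 'I_n.+1) (a b a' b' : nat) :
  (forall u, ((a <= F u)%N && (F u <= b)%N) = ((a' <= G u)%N && (G u <= b')%N)) ->
  iso le' (pull F (Jmod k n a b)) (pull G (Jmod k n a' b')).
Proof.
move=> h.
exact: (@iso_ind (srel n) k le' (fun u => (a <= F u)%N && (F u <= b)%N)
                          (fun u => (a' <= G u)%N && (G u <= b')%N) h).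
Qed.

Lemma rearr (T : Type) (le' : rel T) (A0 B0 C1 A1 B1 C0 Z : rep T k) :
  iso le' A0 C0 -> iso le' B0 A1 -> iso le' C1 B1 ->
  iso le' (dsum (dsum (dsum A0 B0) Z) (dsum (dsum Z Z) C1))
          (dsum (dsum (dsum A1 B1) Z) (dsum (dsum Z Z) C0)).
Proof.
move=> h1 h2 h3.
apply: iso_trans (iso_dsum (iso_dsum (iso_dsum h1 h2) (iso_refl _ _))
                           (iso_dsum (iso_refl _ _) h3)) _.
apply: iso_trans (iso_dsum (iso_refl _ _) (iso_dsumC _ _ _)) _.
apply: iso_trans (iso_shuffle _ _ _ _ _) _.
apply: iso_trans (iso_dsum (iso_trans (iso_dsumA _ _ _ _) (iso_dsumC _ _ _)) (iso_refl _ _)) _.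
apply: iso_trans (iso_sym (iso_shuffle _ _ _ _ _)) _.
exact: iso_dsum (iso_refl _ _) (iso_dsumC _ _ _).
Qed.

Lemma E0J : @E0 k n (cls (Jmod k n 0 n)).
Proof.
exists (zero_rep _ k); split; first exact: is_module_zero.
apply: iso_dsum (iso_dsum _ (iso_refl _ _)) (iso_refl _ _).
apply: iso_pullJ => -[[i j] h]; rewrite /d0 /d1 /=; move: (ltn_ord i) (ltn_ord j) h => /=; lia.
Qed.

Lemma E0T : @E0 k n (Tcls k n).
Proof.
exists (zero_rep _ k); split; first exact: is_module_zero.
apply: iso_dsum _ (iso_refl _ _).
have h1 : iso (@leE n) (pull (@d0 n) (Jmod k n 0 n.-1)) (pull (@d0 n) (Jmod k n 1 n.-1)).
  apply: iso_pullJ => -[[i j] h]; rewrite /d0 /d1 /=; move: (ltn_ord i) (ltn_ord j) h => /=; lia.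
have h2 : iso (@leE n) (pull (@d0 n) (Jmod k n 1 n)) (pull (@d1 n) (Jmod k n 0 n.-1)).
  apply: iso_pullJ => -[[i j] h]; rewrite /d0 /d1 /=; move: (ltn_ord i) (ltn_ord j) h => /=; lia.
have h3 : iso (@leE n) (pull (@d1 n) (Jmod k n 1 n.-1)) (pull (@d1 n) (Jmod k n 1 n)).
  apply: iso_pullJ => -[[i j] h]; rewrite /d0 /d1 /=; move: (ltn_ord i) (ltn_ord j) h => /=; lia.
pose Z := zero_rep (srel n) k.
change (iso (@leE n)
  (dsum (dsum (dsum (pull (@d0 n) (Jmod k n 0 n.-1)) (pull (@d0 n) (Jmod k n 1 n))) Z)
        (dsum (dsum Z Z) (pull (@d1 n) (Jmod k n 1 n.-1))))
  (dsum (dsum (dsum (pull (@d1 n) (Jmod k n 0 n.-1)) (pull (@d1 n) (Jmod k n 1 n))) Z)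
        (dsum (dsum Z Z) (pull (@d0 n) (Jmod k n 1 n.-1))))).
exact: (rearr Z h1 h2 h3).
Qed.

Lemma G0S : @G0 k n (cls (Smod k n)).
Proof.
exists (zero_rep _ k); split; first exact: is_module_zero.
apply: iso_dsum (iso_dsum _ (iso_refl _ _)) (iso_refl _ _).
exists (fun _ => 1%:M), (fun _ => 1%:M); split => [u|r s]; first by rewrite mul1mx.
rewrite mulmx1 mul1mx /= /leG /d0 /d1.
case: r s => [[i j] h] [[i' j'] h'] /=; rewrite xpair_eqE.
case/orP => [/andP [/eqP -> /eqP ->]|c]; first by rewrite !eqxx.
have -> : (j == j') = false by apply/negbTE; rewrite -val_eqE /=; move: h h' c => /=; lia.
have -> : (i == i') = false by apply/negbTE; rewrite -val_eqE /=; move: h h' c => /=; lia.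
by [].
Qed.

End Final2.


Section Final3.
Variables (k : fieldType) (n : nat).
Hypothesis hn : (2 <= n)%N.
Local Notation le := (@leN n).
Local Notation J := (cls (Jmod k n 0 n)).
Local Notation S := (cls (Smod k n)).
Local Notation T := (Tcls k n).

Lemma vpull_add (U V : Type) (F : U -> V) (x y : vmod V k) :
  vpull F (vadd x y) = vadd (vpull F x) (vpull F y).
Proof. by []. Qed.

Lemma E0_comb a c : @E0 k n (vadd (vscale a J) (vscale c T)).
Proof.
rewrite /E0 vpull_add !vpull_scale vpull_add !vpull_scale.
apply: grEq_add; apply: grEq_scale; [exact: E0J | exact: E0T].
Qed.

Lemma mJ : is_vmod le J.
Proof. exact/is_vmod_cls/Jmod_module. Qed.
Lemma mS : is_vmod le S.
Proof. exact/is_vmod_cls/Smod_module. Qed.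
Lemma mT : is_vmod le T.
Proof.
rewrite /Tcls /vsub; apply: is_vmod_add; first apply: is_vmod_add.
- exact/is_vmod_cls/Jmod_module.
- exact/is_vmod_cls/Jmod_module.
by apply: is_vmod_opp; exact/is_vmod_cls/Jmod_module.
Qed.

Definition bJ (i j : 'I_n.+1) : int := 1.
Definition bS (i j : 'I_n.+1) : int := Posz (nat_of_bool ((i : nat) == j)).
Definition bT (i j : 'I_n.+1) : int := 1 - Posz (nat_of_bool (((i : nat) == 0%N) && ((j : nat) == n))).

Lemma arith (i j : nat) (d00 d01 d0n : int) : (i <= j)%N -> (j <= n)%N ->
  (if i == j then d00 else if (i == 0%N) && (j == n) then d0n else d01) =
  d0n + (d00 - d01) * Posz (nat_of_bool (i == j)) +
  (d01 - d0n) * (1 - Posz (nat_of_bool ((i == 0%N) && (j == n)))).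
Proof.
move=> h1 h2.
case: (eqVneq i j) => e1; case: (eqVneq i 0%N) => e2; case: (eqVneq j n) => e3 /=; lia.
Qed.

Lemma rkv_dn (x : vmod 'I_n.+1 k) (i j : 'I_n.+1) : rkv x i j = dn x i j.
Proof. by rewrite /dn !inord_val. Qed.

End Final3.

Theorem proposition5p2 (k : fieldType) (n : nat) (hn : (2 <= n)%N) :
  let J := cls (Jmod k n 0 n) in
  let S := cls (Smod k n) in
  let T := Tcls k n in
  let eqv := grEq (@leN n) in
  [/\ G0 J, G0 S, G0 T,
      (forall a b c : int,
          eqv (vadd (vscale a J) (vadd (vscale b S) (vscale c T))) (vzero _ _) ->
          [/\ a = 0, b = 0 & c = 0]) &
      (forall x : vmod 'I_n.+1 k, is_vmod (@leN n) x -> G0 x ->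
          exists a b c : int,
            eqv x (vadd (vscale a J) (vadd (vscale b S) (vscale c T))))]
  /\
  [/\ E0 J, E0 T,
      (forall a c : int,
          eqv (vadd (vscale a J) (vscale c T)) (vzero _ _) -> a = 0 /\ c = 0) &
      (forall x : vmod 'I_n.+1 k, is_vmod (@leN n) x -> E0 x ->
          exists a c : int, eqv x (vadd (vscale a J) (vscale c T)))]
  /\
  [/\ (forall x : vmod 'I_n.+1 k, is_vmod (@leN n) x -> E0 x -> G0 x),
      (forall x : vmod 'I_n.+1 k, is_vmod (@leN n) x -> G0 x ->
          exists (e : vmod 'I_n.+1 k) (m : int),
            [/\ is_vmod (@leN n) e, E0 e & eqv x (vadd e (vscale m S))]) &
      (forall (e e' : vmod 'I_n.+1 k) (m m' : int),
          is_vmod (@leN n) e -> is_vmod (@leN n) e' -> E0 e -> E0 e' ->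
          eqv (vadd e (vscale m S)) (vadd e' (vscale m' S)) ->
          m = m' /\ eqv e e')].
Proof.
move=> J S T eqv; rewrite {}/J {}/S {}/T {}/eqv.
have hn1 : (1 < n.+1)%N by lia.
have hn2 : (2 < n.+1)%N by lia.
pose o0 : 'I_n.+1 := ord0.
pose o1 : 'I_n.+1 := inord 1.
pose o2 : 'I_n.+1 := inord 2.
pose on : 'I_n.+1 := ord_max.
have v1 : (o1 : nat) = 1%N by rewrite inordK.
have v2 : (o2 : nat) = 2%N by rewrite inordK.
have vn : (on : nat) = n by [].
have l00 : (o0 <= o0)%N by [].
have l01 : (o0 <= o1)%N by rewrite v1.
have l0n : (o0 <= on)%N by [].
have l12 : (o1 <= o2)%N by rewrite v1 v2.
have n0 : (0 == n)%N = false by apply/negbTE; rewrite eq_sym -lt0n; lia.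
have n1 : (1 == n)%N = false by apply/negbTE; rewrite eq_sym; lia.
have val3 : forall (a b c : int) (i j : 'I_n.+1), (i <= j)%N ->
    rkv (vadd (vscale a (cls (Jmod k n 0 n))) (vadd (vscale b (cls (Smod k n))) (vscale c (Tcls k n)))) i j
    = a + b * Posz (nat_of_bool ((i : nat) == j)) + c * (1 - Posz (nat_of_bool (((i : nat) == 0%N) && ((j : nat) == n)))).
  by move=> a b c i j ij; rewrite !rkv_add !rkv_scale rkv_J // rkv_S rkv_T // mulr1 addrA.
have val2 : forall (a c : int) (i j : 'I_n.+1), (i <= j)%N ->
    rkv (vadd (vscale a (cls (Jmod k n 0 n))) (vscale c (Tcls k n))) i j
    = a + c * (1 - Posz (nat_of_bool (((i : nat) == 0%N) && ((j : nat) == n)))).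
  by move=> a c i j ij; rewrite !rkv_add !rkv_scale rkv_J // rkv_T // mulr1.
have valS : forall (m : int) (i j : 'I_n.+1),
    rkv (vscale m (cls (Smod k n))) i j = m * Posz (nat_of_bool ((i : nat) == j)).
  by move=> m i j; rewrite rkv_scale rkv_S.
have m3 : forall a b c : int, is_vmod (@leN n)
    (vadd (vscale a (cls (Jmod k n 0 n))) (vadd (vscale b (cls (Smod k n))) (vscale c (Tcls k n)))).
  move=> a b c; apply: is_vmod_add; first exact/is_vmod_scale/mJ.
  by apply: is_vmod_add; apply: is_vmod_scale; [exact: mS | exact: mT].
have m2 : forall a c : int, is_vmod (@leN n)
    (vadd (vscale a (cls (Jmod k n 0 n))) (vscale c (Tcls k n))).
  by move=> a c; apply: is_vmod_add; apply: is_vmod_scale; [exact: mJ | exact: mT].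
have spanG : forall x : vmod 'I_n.+1 k, is_vmod (@leN n) x -> G0 x ->
    forall i j : 'I_n.+1, (i <= j)%N ->
    rkv x i j = rkv (vadd (vscale (dn x 0 n) (cls (Jmod k n 0 n)))
      (vadd (vscale (dn x 0 0 - dn x 0 1) (cls (Smod k n)))
            (vscale (dn x 0 1 - dn x 0 n) (Tcls k n)))) i j.
  move=> x hx g i j ij; rewrite val3 // rkv_dn (shapeR hn g) //; last by rewrite -ltnS.
  by rewrite arith // -ltnS.
split; last split.
- split.
  + exact (E0G0 hn (E0J k hn)).
  + exact (G0S k hn).
  + exact (E0G0 hn (E0T k hn)).
  + move=> a b c h.
    have e00 := grEq_rkv h l00; have e01 := grEq_rkv h l01; have e0n := grEq_rkv h l0n.
    rewrite !val3 // !rkv_zero ?v1 /= in e00 e01 e0n.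
    move: e00 e01 e0n; rewrite /= n0 n1 eqxx /= => e00 e01 e0n; split; lia.
  + move=> x hx g; exists (dn x 0 n), (dn x 0 0 - dn x 0 1), (dn x 0 1 - dn x 0 n).
    by apply: (spanR hx (m3 _ _ _)) => i j ij; exact: spanG.
- split.
  + exact (E0J k hn).
  + exact (E0T k hn).
  + move=> a c h.
    have e00 := grEq_rkv h l00; have e0n := grEq_rkv h l0n.
    rewrite !val2 // !rkv_zero /= in e00 e0n.
    move: e00 e0n; rewrite /= n0 eqxx /= => e00 e0n; split; lia.
  + move=> x hx e; have g := E0G0 hn e.
    have lt01 : (o0 < o1)%N by rewrite v1.
    have lt02 : (o0 < o2)%N by rewrite v2.
    have h12 : dn x 1 2 = dn x 0 0.
      by have := E0_rel e lt01 lt02 (leqnn _) l12; rewrite !rkv_dn v1 v2.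
    have s12 : dn x 1 2 = dn x 0 1 by rewrite (shapeR hn g).
    exists (dn x 0 n), (dn x 0 1 - dn x 0 n).
    apply: (spanR hx (m2 _ _)) => i j ij.
    rewrite (spanG x hx g i j ij) val3 // val2 //.
    have -> : dn x 0 0 - dn x 0 1 = 0 by rewrite -h12 s12 subrr.
    by rewrite mul0r addr0.
- have lt01 : (o0 < o1)%N by rewrite v1.
  have lt02 : (o0 < o2)%N by rewrite v2.
  split.
  + by move=> x _ e; exact (E0G0 hn e).
  + move=> x hx g.
    exists (vadd (vscale (dn x 0 n) (cls (Jmod k n 0 n))) (vscale (dn x 0 1 - dn x 0 n) (Tcls k n))).
    exists (dn x 0 0 - dn x 0 1); split.
    * exact: m2.
    * exact: E0_comb.
    apply: (spanR hx) => [|i j ij].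
      by apply: is_vmod_add; [exact: m2 | apply: is_vmod_scale; exact: mS].
    rewrite (spanG x hx g i j ij) val3 // rkv_add val2 // valS.
    ring.
  + move=> e e' m m' he he' Ee Ee' h.
    have a00 := grEq_rkv h l00; have a12 := grEq_rkv h l12.
    rewrite !rkv_add !valS in a00 a12.
    have r := E0_rel Ee lt01 lt02 (leqnn _) l12.
    have r' := E0_rel Ee' lt01 lt02 (leqnn _) l12.
    have mm : m = m'.
      move: a00 a12 r r'; rewrite v1 v2 /=; lia.
    split => //; subst m'.
    apply: (spanR he he') => i j ij.
    by have := grEq_rkv h ij; rewrite !rkv_add => /addIr.
Qed.
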